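(* Assume $\int_{(0,1)}\upsilon^p\lambda(d\upsilon)<\infty$ for some $p\in(1,2)$ and $\int_{[1,\infty)}\upsilon\,\lambda(d\upsilon)<\infty$. Then for every $q\ge1$ there is a constant $\mathbf c_q$ with $\lim_{q\to\infty}\mathbf c_q=0$ such that for every $m\ge1$ and every $h\in(0,1)$, $$\int_{(0,q)^m}\mathbf 1_{\{\prod_{j=1}^m u_j\ge h\,q^m\}}\prod_{i=1}^m u_i\,\lambda(du_i)\le\frac{1}{p-1}\,\frac{(\mathbf c_q)^m h^{1-p}}{(m-1)!}\big[\log(2^m/h)\big]^{m-1}.$$ In particular, for every $\varepsilon\in(0,1)$, $$\int_{(0,q)^m}\mathbf 1_{\{\prod_{j=1}^m u_j\ge h\,q^m\}}\prod_{i=1}^m u_i\,\lambda(du_i)\le\frac{(2^{\varepsilon}\mathbf c_q/\varepsilon)^m}{p-1}\,h^{1-p-\varepsilon}.$$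
   Context: $\lambda$ is a positive measure on $(0,\infty)$ with $\lambda([a,\infty))<\infty$ for every $a>0$. *)

(* Defs.v *)
From HB Require Import structures.
From mathcomp Require Import all_boot all_order all_algebra.
From mathcomp Require Import all_classical all_reals all_analysis.
Set Implicit Arguments. Unset Strict Implicit. Unset Printing Implicit Defensive.
Import Order.TTheory GRing.Theory Num.Theory.
Local Open Scope classical_set_scope.
Local Open Scope ring_scope.
Local Open Scope ereal_scope.

(* For nonnegative measurable f this is the integral w.r.t. the m-fold
   product measure (Tonelli). *)
Fixpoint iint (R : realType) (mu : {measure set R -> \bar R}) (D : set R)
  (m : nat) (f : seq R -> \bar R) {struct m} : \bar R :=
  match m with
  | 0%N => f [::]
  | m'.+1 => \int[mu]_(x in D) iint mu D m' (fun s => f (x :: s))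
  end.

(* Main.v *)
Require Import Defs.
From HB Require Import structures.
From mathcomp Require Import all_boot all_order all_algebra.
From mathcomp Require Import all_classical all_reals all_analysis.
From mathcomp Require Import measurable_realfun.
From mathcomp Require Import ring.
Import Order.TTheory GRing.Theory Num.Theory.
Local Open Scope classical_set_scope.
Local Open Scope ring_scope.

Section IINT.
Context (R : realType) (mu : {measure set R -> \bar R}) (D : set R).
Local Open Scope ereal_scope.

Lemma le_integral_gen (f g : R -> \bar R) :
  (forall x, D x -> 0 <= f x) -> (forall x, D x -> f x <= g x) ->
  \int[mu]_(x in D) f x <= \int[mu]_(x in D) g x.
Proof.
move=> f0 fg.
have g0 : forall x, D x -> 0 <= g x by move=> x Dx; exact: le_trans (f0 _ Dx) (fg _ Dx).
rewrite (ge0_integralE _ f0) (ge0_integralE _ g0).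
apply: ereal_sup_le => _ [h /= hf <-]; exists h => //= x.
apply: (le_trans (hf x)); rewrite /patch; case: ifP => // /set_mem Dx.
exact: fg.
Qed.

Lemma iint_ge0 m (f : seq R -> \bar R) :
  (forall s, size s = m -> (forall u, u \in s -> D u) -> 0 <= f s) -> 0 <= iint mu D m f.
Proof.
elim: m f => [|m IH] f f0 /=; first by apply: f0.
apply: integral_ge0 => x Dx; apply: IH => s ss Hs; apply: f0; first by rewrite /= ss.
move=> u; rewrite in_cons => /orP[/eqP -> //|]; exact: Hs.
Qed.

Lemma iint_le m (f g : seq R -> \bar R) :
  (forall s, size s = m -> (forall u, u \in s -> D u) -> 0 <= f s /\ f s <= g s) ->
  iint mu D m f <= iint mu D m g.
Proof.
elim: m f g => [|m IH] f g fg /=; first by case: (fg [::] erefl) => //.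
have hs : forall x s, D x -> (forall u, u \in s -> D u) -> (forall u, u \in x :: s -> D u).
  by move=> x s Dx Hs u; rewrite in_cons => /orP[/eqP -> //|]; exact: Hs.
apply: le_integral_gen => x Dx.
  apply: iint_ge0 => s ss Hs.
  by case: (fg (x :: s)); [rewrite /= ss | exact: hs |].
apply: IH => s ss Hs; apply: fg => /=; [by rewrite ss | exact: hs].
Qed.
End IINT.

Lemma iint_prod (R : realType) (mu : {measure set R -> \bar R}) (D : set R)
  (phi : R -> R) (c : R) : measurable D -> measurable_fun D phi ->
  (forall x, D x -> 0 <= phi x) ->
  (\int[mu]_(x in D) (phi x)%:E = c%:E)%E ->
  forall m (C : R), 0 <= C ->
  iint mu D m (fun s => (C * \prod_(u <- s) phi u)%:E) = (C * c ^+ m)%:E.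
Proof.
move=> mD mphi phi0 Hc; elim=> [|m IH] C C0 /=; first by rewrite big_nil expr0.
transitivity (\int[mu]_(x in D) ((C * c ^+ m)%:E * (phi x)%:E))%E.
  apply: eq_integral => x /set_mem Dx.
  transitivity (iint mu D m (fun s => ((C * phi x) * \prod_(u <- s) phi u)%:E)).
    by congr iint; apply: funext => s; rewrite big_cons mulrA.
  by rewrite IH ?mulr_ge0 ?phi0 // -EFinM; congr EFin; rewrite mulrAC.
rewrite ge0_integralZl_EFin //.
- by rewrite Hc -EFinM exprS; congr EFin; rewrite mulrA mulrAC.
- by apply/measurable_EFinP.
- by rewrite mulr_ge0 // exprn_ge0 // -lee_fin -Hc integral_ge0 // => x Dx; rewrite lee_fin phi0.
Qed.

Lemma prod_powR (R : realType) (p r : R) (s : seq R) :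
  (forall u, u \in s -> 0 <= u) ->
  \prod_(u <- s) (u `^ p * r) = (\prod_(u <- s) u) `^ p * r ^+ size s.
Proof.
elim: s => [|x s IH] Hs; first by rewrite !big_nil powR1 mulr1.
rewrite !big_cons IH; last by move=> u us; apply: Hs; rewrite in_cons us orbT.
have x0 : 0 <= x by apply: Hs; rewrite in_cons eqxx.
have P0 : 0 <= \prod_(u <- s) u.
  rewrite big_seq; apply: (big_ind (fun x => 0 <= x)) => //; [exact: mulr_ge0 | move=> u us; apply: Hs; rewrite in_cons us orbT //].
by rewrite (powRM p x0 P0) /= exprS -!mulrA; congr (_ * _); rewrite mulrCA.
Qed.

Lemma key_ineq (R : realType) (p a P : R) : 1 < p -> 0 < a -> a <= P ->
  P <= a `^ (1 - p) * P `^ p.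
Proof.
move=> p1 a0 aP.
have P0 : 0 <= P by rewrite ltW // (lt_le_trans a0 aP).
rewrite -(mulr_powRB1 P0 (lt_trans ltr01 p1)).
have -> : 1 - p = - (p - 1) by rewrite opprB.
rewrite powRN mulrCA -[X in X <= _]mulr1 ler_wpM2l //.
have ha : 0 < a `^ (p - 1) by exact: powR_gt0.
rewrite ler_pdivlMl // mulr1; apply: ge0_ler_powR => //.
- by rewrite subr_ge0 ltW.
- by rewrite nnegrE ltW.
Qed.

Lemma pointwise (R : realType) (p q h : R) (m : nat) (s : seq R) :
  1 < p -> 1 <= q -> 0 < h -> size s = m -> (forall u, u \in s -> 0 < u) ->
  0 <= (if h * q ^+ m <= \prod_(u <- s) u then \prod_(u <- s) u else 0) /\
  (if h * q ^+ m <= \prod_(u <- s) u then \prod_(u <- s) u else 0)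
    <= h `^ (1 - p) * \prod_(u <- s) (u `^ p * q `^ (1 - p)).
Proof.
move=> p1 q1 h0 sm Hs.
have P0 : 0 < \prod_(u <- s) u by rewrite big_seq; apply: (big_ind (fun x => 0 < x)) => //; by [move=> a b; exact: mulr_gt0 | exact: Hs].
have q0 : 0 <= q by rewrite (le_trans ler01).
rewrite prod_powR; last by move=> u /Hs /ltW.
have rhs0 : 0 <= h `^ (1 - p) * ((\prod_(u <- s) u) `^ p * q `^ (1 - p) ^+ size s).
  by rewrite !mulr_ge0 ?powR_ge0 ?exprn_ge0 ?powR_ge0.
case: ifP => hP; split => //; try by rewrite ltW.
have Q0 : 0 < q ^+ m by rewrite exprn_gt0 // (lt_le_trans ltr01 q1).
have -> : q `^ (1 - p) ^+ size s = (q ^+ m) `^ (1 - p).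
  rewrite sm -powR_mulrn ?powR_ge0 // -powRrM [X in q `^ X]mulrC powRrM.
  by rewrite powR_mulrn.
rewrite mulrCA -(powRM _ (ltW h0) (ltW Q0)) mulrC; apply: key_ineq => //.
by rewrite mulr_gt0.
Qed.

Definition phiq {R : realType} (p q u : R) := u `^ p * q `^ (1 - p).

Section Lim.
Context (R : realType) (lam : {measure set R -> \bar R}) (p : R).
Hypothesis p1 : 1 < p.
Hypothesis H1 : (\int[lam]_(u in `]0%R, 1%R[%classic) ((u `^ p)%:E) < +oo)%E.
Hypothesis H2 : (\int[lam]_(u in `[1%R, +oo[%classic) (u%:E) < +oo)%E.

Definition rq (q : R) (u : R) := phiq p q u * \1_(`]0%R, q[%classic) u.
Definition gg (x : R) := x `^ p * \1_(`]0%R, 1%R[%classic) x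
                          + x * \1_(`[1%R, +oo[%classic) x.

Lemma patch_EFin (f : R -> R) (D : set R) x :
  ((fun u => (f u)%:E) \_ D) x = (f x * \1_D x)%:E.
Proof. by rewrite /patch indicE; case: ifP => _; rewrite ?mulr1 ?mulr0. Qed.

Lemma F_eq (q : R) : (\int[lam]_(u in `]0%R, q[%classic) (phiq p q u)%:E =
  \int[lam]_u (rq q u)%:E)%E.
Proof. by rewrite integral_mkcond; apply: eq_integral => x _; rewrite patch_EFin. Qed.

Lemma mphiq (q : R) (D : set R) : measurable_fun D (phiq p q).
Proof.
apply: measurable_funM; last exact: measurable_cst.
exact: measurable_funS (measurable_powR p).
Qed.

Lemma mrq (q : R) : measurable_fun setT (rq q).
Proof. by apply: measurable_funM; [exact: mphiq | apply: measurable_indic; exact: measurable_itv]. Qed.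

Lemma mgg : measurable_fun setT gg.
Proof.
apply: measurable_funD; apply: measurable_funM.
- exact: measurable_funS (measurable_powR p).
- by apply: measurable_indic; exact: measurable_itv.
- exact: measurable_id.
- by apply: measurable_indic; exact: measurable_itv.
Qed.

Lemma rq_ge0 (q x : R) : 0 <= rq q x.
Proof. by rewrite /rq /phiq !mulr_ge0 ?powR_ge0 ?indicE ?ler0n. Qed.

Lemma gg_ge0 (x : R) : 0 <= gg x.
Proof.
rewrite /gg !indicE; case: (boolP (x \in `[1%R, +oo[%classic)) => [/set_mem|] H.
  move: H; rewrite /= in_itv /= andbT => x1.
  by rewrite mulr1 addr_ge0 ?mulr_ge0 ?powR_ge0 ?ler0n // (le_trans ler01).
by rewrite mulr0 addr0 mulr_ge0 ?powR_ge0 ?ler0n.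
Qed.

Lemma rq_le_gg (q x : R) : 1 <= q -> rq q x <= gg x.
Proof.
move=> q1; rewrite /rq indicE; case: (boolP (x \in `]0%R, q[%classic)) => [/set_mem|] H; last first.
  by rewrite mulr0 gg_ge0.
move: H; rewrite /= in_itv /= => /andP[x0 xq]; rewrite mulr1 /gg !indicE.
have p0 : 0 < p by exact: lt_trans ltr01 p1.
case: (ltP x 1) => x1.
  have -> : (x \in `]0%R, 1%R[%classic) by apply/mem_set; rewrite /= in_itv /= x0.
  have -> : (x \in `[1%R, +oo[%classic) = false.
    by apply/negbTE/negP => /set_mem; rewrite /= in_itv /= andbT leNgt x1.
  rewrite mulr1 mulr0 addr0 /phiq -[leRHS]mulr1 ler_wpM2l ?powR_ge0 //.
  by rewrite -[leRHS](powRr0 q) ler_powR // subr_le0 ltW.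
have -> : (x \in `]0%R, 1%R[%classic) = false.
  by apply/negbTE/negP => /set_mem; rewrite /= in_itv /= => /andP[_]; rewrite ltNge x1.
have -> : (x \in `[1%R, +oo[%classic) by apply/mem_set; rewrite /= in_itv /= x1.
rewrite mulr1 mulr0 add0r /phiq -(mulr_powRB1 (ltW x0) p0).
have -> : 1 - p = - (p - 1) by rewrite opprB.
rewrite powRN -mulrA -[leRHS]mulr1; apply: ler_wpM2l; first exact: ltW.
have hq : 0 < q `^ (p - 1) by apply: powR_gt0; exact: lt_le_trans ltr01 q1.
rewrite ler_pdivrMr // mul1r; apply: ge0_ler_powR; rewrite ?nnegrE.
- by rewrite subr_ge0 ltW.
- exact: ltW.
- exact: le_trans ler01 q1.
- exact: ltW.
Qed.

Lemma int_gg : (\int[lam]_x (gg x)%:E < +oo)%E.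
Proof.
rewrite /gg; under eq_integral do rewrite EFinD.
rewrite ge0_integralD //; first last.
- by apply/measurable_EFinP; apply: measurable_funM;
    [exact: measurable_id | apply: measurable_indic; exact: measurable_itv].
- by move=> x _; rewrite lee_fin indicE; case: (boolP (x \in _)) => [/set_mem|] H;
    rewrite ?mulr0 // mulr1; move: H; rewrite /= in_itv /= andbT; apply: le_trans.
- by apply/measurable_EFinP; apply: measurable_funM;
    [exact: measurable_funS (measurable_powR p) | apply: measurable_indic; exact: measurable_itv].
- by move=> x _; rewrite lee_fin mulr_ge0 ?powR_ge0 // indicE ler0n.
have E1 : (\int[lam]_x (x `^ p * \1_(`]0%R, 1%R[%classic) x)%:E =
    \int[lam]_(x in `]0%R, 1%R[%classic) (x `^ p)%:E)%E.
  by rewrite [RHS]integral_mkcond; apply: eq_integral => x _; rewrite patch_EFin.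
have E2 : (\int[lam]_x (x * \1_(`[1%R, +oo[%classic) x)%:E =
    \int[lam]_(x in `[1%R, +oo[%classic) x%:E)%E.
  by rewrite [RHS]integral_mkcond; apply: eq_integral => x _; rewrite patch_EFin.
rewrite E1 E2; exact: lte_add_pinfty.
Qed.

Lemma igg : lam.-integrable setT (fun x => (gg x)%:E).
Proof.
apply/integrableP; split; first by apply/measurable_EFinP; exact: mgg.
rewrite (_ : (fun x => `|(gg x)%:E|%E) = (fun x => (gg x)%:E)); last by apply: funext => x; rewrite gee0_abs // lee_fin gg_ge0.
exact: int_gg.
Qed.

Lemma F_fin (q : R) : 1 <= q ->
  (0 <= \int[lam]_(u in `]0%R, q[%classic) (phiq p q u)%:E)%E /\
  (\int[lam]_(u in `]0%R, q[%classic) (phiq p q u)%:E < +oo)%E.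
Proof.
move=> q1; rewrite F_eq; split.
  by apply: integral_ge0 => x _; rewrite lee_fin rq_ge0.
apply: le_lt_trans int_gg; apply: ge0_le_integral => //.
- by move=> x _; rewrite lee_fin rq_ge0.
- by apply/measurable_EFinP; exact: mrq.
- by apply/measurable_EFinP; exact: mgg.
- by move=> x _; rewrite lee_fin rq_le_gg.
Qed.

Lemma pow_cvg0 (u : R^nat) : (forall n, 1 <= u n) -> u n @[n --> \oo] --> +oo ->
  u n `^ (1 - p) @[n --> \oo] --> 0.
Proof.
move=> u1 uoo.
have -> : (fun n => u n `^ (1 - p)) = (fun n => (u n `^ (p - 1))^-1).
  by apply: funext => n; rewrite -powRN opprB.
have := (@gtr0_cvgV0 _ _ _ _ (fun n => u n `^ (p - 1)) _).2; apply.
  by apply: nearW => n; apply: powR_gt0; exact: lt_le_trans ltr01 (u1 n).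
apply/cvgryPge => A.
set B := (Num.max A 1) `^ ((p - 1)^-1).
move/cvgryPge: uoo => /(_ B); apply: filterS => n HB.
have p10 : p - 1 != 0 by rewrite subr_eq0 gt_eqF.
apply: (@le_trans _ _ (B `^ (p - 1))).
  rewrite /B -powRrM mulVf // powRr1; first by rewrite le_max lexx.
  by rewrite le_max ler01 orbT.
apply: ge0_ler_powR => //; rewrite ?nnegrE ?powR_ge0 //.
- by rewrite subr_ge0 ltW.
- exact: le_trans ler01 (u1 n).
Qed.

Lemma F_cvg (u : R^nat) : (forall n, 1 <= u n) -> u n @[n --> \oo] --> +oo ->
  (\int[lam]_x (rq (u n) x)%:E)%E @[n --> \oo] --> 0%E.
Proof.
move=> u1 uoo.
have Hf : \forall x \ae lam, setT x -> (rq (u n) x)%:E @[n --> \oo] --> (cst 0%E x).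
  apply: aeW => x _ /=.
  apply: cvg_EFin; first by apply: nearW.
  have Hh : (x `^ p * u n `^ (1 - p)) @[n --> \oo] --> 0.
    have := cvgM (cvg_cst (x `^ p)) (@pow_cvg0 u u1 uoo); rewrite mulr0; exact.
  apply: (@squeeze_cvgr _ _ _ _ _ _ (fun n => rq (u n) x) _ _ (cvg_cst 0) Hh).
  apply: nearW => n /=; rewrite rq_ge0 /rq /phiq -[leRHS]mulr1.
  by rewrite ler_wpM2l ?mulr_ge0 ?powR_ge0 // indicE; case: (_ \in _).
have Hg : \forall x \ae lam, forall n, setT x -> (`|(rq (u n) x)%:E| <= (gg x)%:E)%E.
  apply: aeW => x n _; rewrite gee0_abs ?lee_fin ?rq_ge0 //.
  exact: rq_le_gg.
have [_ _ H] := @dominated_convergence _ _ _ lam setT measurableT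
  (fun n x => (rq (u n) x)%:E) (cst 0%E) (fun x => (gg x)%:E)
  (fun n => proj2 (measurable_EFinP _ _) (mrq (u n))) (measurable_cst _) Hf igg Hg.
by move: H; rewrite integral0.
Qed.

Definition cF (q : R) := fine (\int[lam]_(u in `]0%R, q[%classic) (phiq p q u)%:E)%E.

Lemma cF_cvg : cF q @[q --> +oo] --> 0.
Proof.
apply/cvg_pinftyP => u uoo.
pose v n := Num.max (u n) 1.
have v1 n : 1 <= v n by rewrite le_max lexx orbT.
have voo : v n @[n --> \oo] --> +oo.
  apply/cvgryPge => A; move/cvgryPge: uoo => /(_ A); apply: filterS => n HA.
  by rewrite (le_trans HA) // le_max lexx.
have Hv := fine_cvg (@F_cvg v v1 voo).
have Heq : {near \oo, (fun n => fine (\int[lam]_x (rq (v n) x)%:E)%E) =1 (fun n => cF (u n))}.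
  move/cvgryPge: uoo => /(_ 1); apply: filterS => n Hn /=.
  rewrite /cF F_eq /v; congr fine.
  by rewrite (_ : Num.max (u n) 1 = u n) // max_l.
apply: cvg_trans (near_eq_cvg Heq) _; apply: Hv; exact: eventually_filter.
Qed.

End Lim.

Lemma fact_le k : (k`! <= k.+1 ^ k)%N.
Proof.
elim: k => [//|k IH]; rewrite factS expnS leq_mul //; apply: (leq_trans IH).
case: k {IH} => // k; rewrite leq_exp2r //.
Qed.

Lemma ln2_ge (R : realType) : 2^-1 <= ln (2 : R).
Proof.
have h : -1 < - 2^-1 :> R by rewrite ltrN2 invf_lt1 // ltr1n.
have := le_ln1Dx h.
have -> : 1 + - 2^-1 = 2^-1 :> R by field.
by rewrite lnV ?posrE // lerN2.
Qed.

Lemma K_ge1 (R : realType) (p h : R) (m : nat) : (1 <= m)%N -> 0 < h < 1 -> 1 < p < 2 ->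
  1 <= (p - 1)^-1 * (2 ^+ m / ((m - 1)`!)%:R * ln (2 ^+ m / h) ^+ (m - 1)).
Proof.
move=> m1 /andP[h0 h1] /andP[p1 p2].
apply: mulr_ege1; first by rewrite invf_ge1 ?subr_gt0 // lerBlDr -[X in _ <= X]/(1 + 1) ltW.
case: m m1 => // k _; rewrite subSS subn0.
have f0 : 0 < (k`!)%:R :> R by rewrite ltr0n fact_gt0.
rewrite mulrAC ler_pdivlMr // mul1r.
have L : (k.+1)%:R <= 2 * ln (2 ^+ k.+1 / h) :> R.
  have : ln (2 ^+ k.+1) <= ln (2 ^+ k.+1 / h) :> R.
    rewrite ler_ln ?posrE ?divr_gt0 ?exprn_gt0 //.
    by rewrite ler_peMr ?exprn_ge0 // invf_ge1 // ltW.
  rewrite lnXn // => H; apply: le_trans (ler_wpM2l _ H) => //.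
  rewrite -[X in 2 * X]mulr_natr mulrA -[leLHS]mul1r ler_wpM2r //.
  by have := @ler_wpM2l _ 2 (ler0n _ 2) _ _ (ln2_ge R); rewrite mulfV.
apply: (@le_trans _ _ ((k.+1 ^ k)%:R)); first by rewrite ler_nat fact_le.
move: L; set L := ln _ => HL. rewrite natrX exprS -mulrA -exprMn.
rewrite -[leLHS]mul1r; apply: ler_pM => //; first by rewrite ler1n.
apply: lerXn2r => //; rewrite ?nnegrE //. exact: le_trans HL.
Qed.

Theorem lemma4p7 (R : realType) (lam : {measure set R -> \bar R}) (p : R) :
  (* lambda is a measure on (0, oo) *)
  lam `]-oo, 0]%classic = 0%E ->
  (forall a : R, 0 < a -> (lam `[a, +oo[%classic < +oo)%E) ->
  1 < p < 2 ->
  (\int[lam]_(u in `]0%R, 1%R[%classic) ((u `^ p)%:E) < +oo)%E ->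
  (\int[lam]_(u in `[1%R, +oo[%classic) (u%:E) < +oo)%E ->
  exists c : R -> R,
    c q @[q --> +oo] --> 0 /\
    forall q : R, 1 <= q ->
    forall m : nat, (1 <= m)%N ->
    forall h : R, 0 < h < 1 ->
      let I := iint lam `]0, q[%classic m
        (fun s => (if h * q ^+ m <= \prod_(u <- s) u
                   then \prod_(u <- s) u else 0)%:E) in
      (I <= ((p - 1)^-1 * (c q ^+ m * h `^ (1 - p)) / ((m - 1)`!)%:R
               * (ln (2 ^+ m / h)) ^+ (m - 1))%:E)%E /\
      (forall eps : R, 0 < eps < 1 ->
        (I <= ((2 `^ eps * c q / eps) ^+ m / (p - 1) * h `^ (1 - p - eps))%:E)%E).
Proof.
move=> Hneg Hfin /andP[p1 p2] H1 H2.
exists (fun q => 2 * cF R lam p q); split.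
  have := cvgMl_tmp (a := 2) (@cF_cvg R lam p p1 H1 H2).
  rewrite mulr0; apply.
move=> q q1 m m1 h /andP[h0 h1] I.
set c' := cF R lam p q.
have [F0 Ffin] := @F_fin R lam p p1 H1 H2 q q1.
have Fc : (\int[lam]_(u in `]0%R, q[%classic) (phiq p q u)%:E = c'%:E)%E.
  by rewrite /c' /cF fineK // ge0_fin_numE.
have c0 : 0 <= c' by rewrite /c' /cF fine_ge0.
have q0 : 0 < q by exact: lt_le_trans ltr01 q1.
have HI : (I <= (h `^ (1 - p) * c' ^+ m)%:E)%E.
  rewrite /I -(@iint_prod R lam `]0%R, q[%classic (phiq p q) c' (measurable_itv _)
     (mphiq R p q _) _ Fc m (h `^ (1 - p)) (powR_ge0 _ _)); last first.
    by move=> x _; rewrite /phiq mulr_ge0 ?powR_ge0.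
  apply: iint_le => s ss Hs.
  have Hs' : forall u, u \in s -> 0 < u.
    by move=> u /Hs; rewrite /= in_itv /= => /andP[].
  have [A B] := @pointwise R p q h m s p1 q1 h0 ss Hs'.
  by rewrite !lee_fin; split.
split.
  apply: (le_trans HI); rewrite lee_fin.
  have hp0 : 0 <= h `^ (1 - p) * c' ^+ m by rewrite mulr_ge0 ?powR_ge0 ?exprn_ge0.
  have -> : (p - 1)^-1 * ((2 * c') ^+ m * h `^ (1 - p)) / ((m - 1)`!)%:R *
      ln (2 ^+ m / h) ^+ (m - 1) =
    (h `^ (1 - p) * c' ^+ m) * ((p - 1)^-1 * (2 ^+ m / ((m - 1)`!)%:R *
      ln (2 ^+ m / h) ^+ (m - 1))).
    by rewrite exprMn; ring.
  by apply: ler_peMr => //; apply: K_ge1 => //; apply/andP; split.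
move=> eps /andP[e0 e1].
apply: (le_trans HI); rewrite lee_fin.
have pinv : 1 <= (p - 1)^-1 by rewrite invf_ge1 ?subr_gt0 // lerBlDr -[X in _ <= X]/(1 + 1) ltW.
have e2 : h `^ (1 - p) <= (p - 1)^-1 * h `^ (1 - p - eps).
  apply: (@le_trans _ _ (h `^ (1 - p - eps))); last by rewrite ler_peMl ?powR_ge0.
  rewrite [X in _ <= X]powRD; last by rewrite (gt_eqF h0) implybT.
  apply: ler_peMr; first exact: powR_ge0.
  rewrite powRN invf_ge1 ?powR_gt0 //.
  have := @ge0_ler_powR R eps (ltW e0) h 1; rewrite powR1; apply.
  - by rewrite nnegrE ltW.
  - by rewrite nnegrE.
  - exact: ltW.
have a1 : 1 <= 2 `^ eps * 2 / eps.
  rewrite -mulrA; apply: mulr_ege1.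
    by have := @ler_powR R 2 (ler1n _ 2) 0 eps (ltW e0); rewrite powRr0.
  by rewrite ler_pdivlMr // mul1r (le_trans (ltW e1)) // ler1n.
have e3 : c' ^+ m <= (2 `^ eps * (2 * c') / eps) ^+ m.
  have -> : 2 `^ eps * (2 * c') / eps = (2 `^ eps * 2 / eps) * c' by ring.
  apply: lerXn2r; rewrite ?nnegrE //; first by rewrite mulr_ge0 // (le_trans ler01).
  exact: ler_peMl.
rewrite [leLHS]mulrC -mulrA; apply: ler_pM => //; rewrite ?exprn_ge0 ?powR_ge0 //.
Qed.
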